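(* Let $\Psi=\{\psi_i\}_{i=1}^N\subset\mathbb{R}^d$ be a frame for $\mathbb{R}^d$ with $\sum_{i=1}^N\psi_i=0$, and let $\mu=\frac1N\sum_{i=1}^N\delta_{\psi_i}$. Then $\mu$ has no equal-weight transport dual supported on a set of cardinality $d$; that is, there is no measure of the form $\nu=\frac1d\sum_{k=1}^d\delta_{\varphi_k}$ with $d$ distinct points $\varphi_1,\dots,\varphi_d\in\mathbb{R}^d$ such that $\nu\in D_\mu$.
   Context: A finite frame for $\mathbb{R}^d$ is a finite set of vectors spanning $\mathbb{R}^d$. $\Gamma(\mu,\nu)$ is the set of probability measures on $\mathbb{R}^d\times\mathbb{R}^d$ with marginals $\mu$ and $\nu$. For a probabilistic frame $\mu$ (a probability measure with finite second moment whose support spans $\mathbb{R}^d$), a probability measure $\nu$ with finite second moment is a transport dual to $\mu$ if there exists $\gamma\in\Gamma(\mu,\nu)$ with $\iint xy^\top d\gamma(x,y)=I$; $D_\mu$ denotes the set of transport duals of $\mu$. *)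

(* Defs.v *)
From HB Require Import structures.
From mathcomp Require Import all_boot all_order all_algebra.
From mathcomp Require Import all_classical all_reals all_analysis.
Set Implicit Arguments. Unset Strict Implicit. Unset Printing Implicit Defensive.
Import Order.TTheory GRing.Theory Num.Theory.
Import numFieldNormedType.Exports.
Local Open Scope classical_set_scope.
Local Open Scope ring_scope.

Definition Rd (R : realType) (d : nat) : measurableType _ :=
  g_sigma_algebraType (open : set (set 'rV[R]_d)).

Definition uniform_atoms (R : realType) (d n : nat) (p : 'I_n -> Rd R d)
  (A : set (Rd R d)) : \bar R :=
  (\sum_(i < n) ((n%:R)^-1)%:E * \d_(p i) A)%E.

Definition is_frame (R : realType) (d N : nat) (psi : 'I_N -> 'rV[R]_d) : Prop :=
  row_full (\matrix_(i < N) psi i).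

Definition is_coupling (R : realType) (d : nat)
  (mu nu : set (Rd R d) -> \bar R)
  (gamma : probability (Rd R d * Rd R d)%type R) : Prop :=
  forall A : set (Rd R d), measurable A ->
    gamma (fst @^-1` A) = mu A /\ gamma (snd @^-1` A) = nu A.

Definition finite_second_moment (R : realType) (d : nat)
  (nu : probability (Rd R d) R) : Prop :=
  (\int[nu]_x (\sum_(i < d) ((x : 'rV[R]_d) 0 i) ^+ 2)%:E < +oo)%E.

(* nu is in D_mu : there is gamma in Gamma(mu,nu) with
   \iint x y^T dgamma = I (entrywise, with the integrals existing) *)
Definition transport_dual (R : realType) (d : nat)
  (mu nu : probability (Rd R d) R) : Prop :=
  finite_second_moment nu /\
  exists gamma : probability (Rd R d * Rd R d)%type R,
    is_coupling mu nu gamma /\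
    forall i j : 'I_d,
      gamma.-integrable setT
        (fun z => (((z.1 : 'rV[R]_d) 0 i) * ((z.2 : 'rV[R]_d) 0 j))%:E) /\
      (\int[gamma]_z (((z.1 : 'rV[R]_d) 0 i) * ((z.2 : 'rV[R]_d) 0 j))%:E
         = ((i == j)%:R)%:E)%E.

(* Main.v *)
Require Import Defs.
From HB Require Import structures.
From mathcomp Require Import all_boot all_order all_algebra.
From mathcomp Require Import all_classical all_reals all_analysis.
From mathcomp Require Import measurable_realfun.
Import Order.TTheory GRing.Theory Num.Theory.
Import numFieldNormedType.Exports.
Local Open Scope classical_set_scope.
Local Open Scope ring_scope.

Lemma Rd_set1 (R : realType) d (a : Rd R d) : measurable [set a].
Proof.
rewrite -[X in measurable X]setCK; apply: measurableC.
apply: sub_sigma_algebra; rewrite openC.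
apply: accessible_closed_set1; apply: hausdorff_accessible.
exact: norm_hausdorff.
Qed.

Lemma Rd_range (R : realType) d n (p : 'I_n -> Rd R d) : measurable (range p).
Proof.
have -> : range p = \bigcup_(i in [set: 'I_n]) [set p i].
  apply/seteqP; split => x.
    by case=> i _ <-; exists i.
  by case=> i _ ->; exists i.
apply: fin_bigcup_measurable => //.
move=> i _; exact: Rd_set1.
Qed.

Lemma uniform_atoms_out (R : realType) d n (p : 'I_n -> Rd R d) :
  uniform_atoms p (~` range p) = 0%E.
Proof.
rewrite /uniform_atoms big1 // => i _.
rewrite diracE memNset ?mule0 //.
by move=> /(_ (ex_intro2 _ _ i I erefl)).
Qed.

Lemma int_ae (R : realType) dd (T : measurableType dd)
  (mu : {measure set T -> \bar R}) (B : set T) (f h : T -> \bar R) :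
  mu.-negligible B -> measurable_fun setT f -> measurable_fun setT h ->
  (forall z, ~ B z -> f z = h z) ->
  (\int[mu]_z f z = \int[mu]_z h z)%E.
Proof.
move=> nB mf mh fh; apply: ae_eq_integral => //.
apply: negligibleS nB => z /= nz; apply: contrapT => Bz; apply: nz => _.
exact: fh.
Qed.

Lemma null_fst (R : realType) d (mu nu : set (Rd R d) -> \bar R)
  (g : probability (Rd R d * Rd R d)%type R) n (p : 'I_n -> Rd R d) :
  is_coupling mu nu g ->
  (forall A, measurable A -> mu A = uniform_atoms p A) ->
  g.-negligible (fst @^-1` (~` range p)).
Proof.
move=> Hc Hmu.
have mA : measurable (~` range p) by apply: measurableC; exact: Rd_range.
apply/negligibleP.
  by rewrite -[X in measurable X]setTI; exact: measurable_fst.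
have [H1 _] := Hc _ mA. transitivity (mu (~` range p)); first exact: H1. by rewrite Hmu // uniform_atoms_out.
Qed.

Lemma null_snd (R : realType) d (mu nu : set (Rd R d) -> \bar R)
  (g : probability (Rd R d * Rd R d)%type R) n (p : 'I_n -> Rd R d) :
  is_coupling mu nu g ->
  (forall A, measurable A -> nu A = uniform_atoms p A) ->
  g.-negligible (snd @^-1` (~` range p)).
Proof.
move=> Hc Hmu.
have mA : measurable (~` range p) by apply: measurableC; exact: Rd_range.
apply/negligibleP.
  by rewrite -[X in measurable X]setTI; exact: measurable_snd.
have [_ H1] := Hc _ mA. transitivity (nu (~` range p)); first exact: H1. by rewrite Hmu // uniform_atoms_out.
Qed.

Section Key.
Variables (R : realType) (d : nat) (g : probability (Rd R d * Rd R d)%type R).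
Hypothesis Hint : forall i j : 'I_d,
      g.-integrable setT
        (fun z => (((z.1 : 'rV[R]_d) 0 i) * ((z.2 : 'rV[R]_d) 0 j))%:E) /\
      (\int[g]_z (((z.1 : 'rV[R]_d) 0 i) * ((z.2 : 'rV[R]_d) 0 j))%:E
         = ((i == j)%:R)%:E)%E.

Definition Fc (c : 'I_d -> R) (i : 'I_d) (z : (Rd R d * Rd R d)%type) : \bar R :=
  (\sum_(l < d) c l * ((z.1 : 'rV[R]_d) 0 i * (z.2 : 'rV[R]_d) 0 l))%:E.

Lemma FcE c i : Fc c i = fun z =>
  (\sum_(l < d) (c l)%:E * ((z.1 : 'rV[R]_d) 0 i * (z.2 : 'rV[R]_d) 0 l)%:E)%E.
Proof.
apply/funext => z; rewrite /Fc -sumEFin; apply: eq_bigr => l _.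
by rewrite EFinM.
Qed.

Lemma Fc_int c i : g.-integrable setT (Fc c i).
Proof.
rewrite FcE; apply: (integrable_sum measurableT) => l _.
apply: (integrableZl measurableT); exact: (Hint i l).1.
Qed.

Lemma Fc_integral c i : (\int[g]_z Fc c i z = (c i)%:E)%E.
Proof.
rewrite FcE (integral_sum measurableT); last first.
  move=> l; apply: (integrableZl measurableT); exact: (Hint i l).1.
rewrite (eq_bigr (fun l => ((c l) * (i == l)%:R)%:E)); last first.
  move=> l _; rewrite (integralZl measurableT (Hint i l).1).
  by rewrite (Hint i l).2 EFinM.
rewrite sumEFin (bigD1 i) //= eqxx mulr1 big1 ?addr0 // => l /negbTE.
by rewrite eq_sym => ->; rewrite mulr0.
Qed.

End Key.

Section Gsec.
Variables (R : realType) (d N : nat) (psi : 'I_N -> Rd R d).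

Definition cnt (n : 'I_N) : nat := #|[pred m | psi m == psi n]|.

Lemma cnt_gt0 n : (0 < cnt n)%N.
Proof. by apply/card_gt0P; exists n; rewrite inE. Qed.


Definition Eset (n : 'I_N) : set (Rd R d * Rd R d)%type := fst @^-1` [set psi n].

Lemma Eset_meas n : measurable (Eset n).
Proof. by rewrite /Eset -[X in measurable X]setTI; apply: measurable_fst => //; exact: Rd_set1. Qed.

Definition Gfun (i : 'I_d) (z : (Rd R d * Rd R d)%type) : \bar R :=
  (\sum_(n < N) ((psi n : 'rV[R]_d) 0 i / (cnt n)%:R) * \1_(Eset n) z)%:E.

Lemma Gfun_at i m z : z.1 = psi m -> Gfun i z = ((psi m : 'rV[R]_d) 0 i)%:E.
Proof.
move=> zm; rewrite /Gfun; congr (_%:E).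
transitivity (\sum_(n in [pred n | psi n == psi m]) ((psi m : 'rV[R]_d) 0 i / (cnt m)%:R)).
  rewrite [RHS]big_mkcond /=; apply: eq_bigr => n _; rewrite inE indicE.
  have [e|ne] := eqVneq (psi n) (psi m).
    have -> : cnt n = cnt m by rewrite /cnt e.
    rewrite e mem_set ?mulr1 //.
    by rewrite /Eset /= zm.
  rewrite memNset ?mulr0 //.
  by rewrite /Eset /= zm => E; move: ne; rewrite E eqxx.
rewrite sumr_const -[_ *+ _]mulr_natr -/(cnt m) divfK //.
by rewrite pnatr_eq0 -lt0n cnt_gt0.
Qed.

Lemma Gfun_int (g : probability (Rd R d * Rd R d)%type R) i :
  g.-integrable setT (Gfun i).
Proof.
have -> : Gfun i = fun z => (\sum_(n < N)
   ((psi n : 'rV[R]_d) 0 i / (cnt n)%:R)%:E * (\1_(Eset n) z)%:E)%E.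
  apply/funext => z; rewrite /Gfun -sumEFin; apply: eq_bigr => n _.
  by rewrite EFinM.
apply: (integrable_sum measurableT) => n _.
apply: (integrableZl measurableT); apply: integrable_indic; exact: Eset_meas.
Qed.

Lemma GfunE i : Gfun i = fun z => (\sum_(n < N)
   ((psi n : 'rV[R]_d) 0 i / (cnt n)%:R)%:E * (\1_(Eset n) z)%:E)%E.
Proof.
apply/funext => z; rewrite /Gfun -sumEFin; apply: eq_bigr => n _.
by rewrite EFinM.
Qed.

Lemma atoms_set1 n : uniform_atoms psi [set psi n] = ((N%:R)^-1 * (cnt n)%:R)%:E.
Proof.
rewrite /uniform_atoms.
rewrite (eq_bigr (fun m => ((N%:R)^-1 * (if psi m == psi n then 1 else 0))%:E)); last first.
  move=> m _; rewrite diracE -EFinM; congr (_ * _)%:E.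
  have [e|ne] := eqVneq (psi m) (psi n).
    by rewrite mem_set.
  by rewrite memNset //; exact/eqP.
rewrite sumEFin -mulr_sumr -big_mkcond /= sumr_const.
by rewrite -[_ *+ _]mulr_natr mul1r.
Qed.

Lemma Gfun_integral (mu nu : set (Rd R d) -> \bar R)
  (g : probability (Rd R d * Rd R d)%type R) i :
  is_coupling mu nu g ->
  (forall A, measurable A -> mu A = uniform_atoms psi A) ->
  \sum_(n < N) (psi n : 'rV[R]_d) = 0 ->
  (\int[g]_z Gfun i z = 0)%E.
Proof.
move=> Hc Hmu Hsum.
rewrite GfunE (integral_sum measurableT); last first.
  move=> n; apply: (integrableZl measurableT); apply: integrable_indic; exact: Eset_meas.
rewrite (eq_bigr (fun n => ((psi n : 'rV[R]_d) 0 i * (N%:R)^-1)%:E)); last first.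
  move=> n _.
  rewrite (integralZl measurableT); last by apply: integrable_indic; exact: Eset_meas.
  rewrite (integral_indic _ measurableT (Eset_meas n)) setIT.
  have [H1 _] := Hc _ (@Rd_set1 R d (psi n)).
  rewrite [X in (_ * X)%E](_ : _ = mu [set psi n]); last exact: H1.
  rewrite Hmu ?atoms_set1; last exact: Rd_set1.
  rewrite -EFinM; congr (_%:E).
  rewrite mulrCA -mulrA mulVf ?mulr1 //.
  by rewrite mulrC. by rewrite pnatr_eq0 -lt0n cnt_gt0.
rewrite sumEFin -mulr_suml.
have -> : \sum_(n < N) (psi n : 'rV[R]_d) 0 i = 0.
  by rewrite -summxE Hsum mxE.
by rewrite mul0r.
Qed.

End Gsec.

Theorem mainTheorem3 (R : realType) (d N : nat) (psi : 'I_N -> Rd R d)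
  (Hframe : is_frame psi)
  (Hsum : \sum_(i < N) (psi i : 'rV[R]_d) = 0)
  (mu : probability (Rd R d) R)
  (Hmu : forall A : set (Rd R d), measurable A -> mu A = uniform_atoms psi A) :
  ~ exists (phi : 'I_d -> Rd R d) (nu : probability (Rd R d) R),
      injective phi /\
      (forall A : set (Rd R d), measurable A -> nu A = uniform_atoms phi A) /\
      transport_dual mu nu.
Proof.
move=> [phi [nu [injphi [Hnu [_ [g [Hc Hint]]]]]]].
have [d0|dpos] := posnP d.
  subst d.
  move: (Hnu _ measurableT); rewrite /uniform_atoms big_ord0 probability_setT.
  by move/eqP; rewrite onee_eq0.
have Bphi := @null_snd _ _ _ _ _ _ _ Hc Hnu.
have Bpsi := @null_fst _ _ _ _ _ _ _ Hc Hmu.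
pose Phi : 'M[R]_d := \matrix_(k, l) (phi k : 'rV[R]_d) 0 l.
have [/eqP detz|detnz] := eqVneq (\det Phi) 0.
  have : \det Phi^T == 0 by rewrite det_tr.
  move/det0P => [v vnz vP].
  have v0 : forall i, v 0 i = 0.
    move=> i.
    have := @Fc_integral _ _ _ Hint (fun l => v 0 l) i.
    rewrite (@int_ae _ _ _ g _ _ (cst 0%E) Bphi); last 3 first.
    - exact: (measurable_int g (@Fc_int _ _ _ Hint _ i)).
    - exact: measurable_cst.
    - move=> z /contrapT [k _ e].
      rewrite /Fc /= -e.
      have H : \sum_(l < d) v 0 l * (phi k : 'rV[R]_d) 0 l = 0.
        transitivity ((v *m Phi^T) 0 k).
          by rewrite mxE; apply: eq_bigr => l _; rewrite !mxE.
        by rewrite vP mxE.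
      congr (_%:E).
      transitivity ((z.1 : 'rV[R]_d) 0 i * \sum_(l < d) v 0 l * (phi k : 'rV[R]_d) 0 l); last by rewrite H mulr0.
      by rewrite mulr_sumr; apply: eq_bigr => l _; rewrite mulrCA.
    by rewrite integral0 => /esym/eqP; rewrite eqe => /eqP.
  suff v00 : v = 0 by move: vnz; rewrite v00 eqxx.
  by apply/rowP => i; rewrite v0 mxE.
have uPhi : Phi \in unitmx by rewrite unitmxE unitfE.
pose u : 'cV[R]_d := invmx Phi *m const_mx 1.
have Pu : Phi *m u = const_mx 1 by rewrite mulmxA mulmxV // mul1mx.
have u0 : forall i, u i 0 = 0.
  move=> i.
  have := @Fc_integral _ _ _ Hint (fun l => u l 0) i.
  rewrite (@int_ae _ _ _ g _ _ (@Gfun _ _ _ psi i) (negligibleU Bpsi Bphi)); last 3 first.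
  - exact: (measurable_int g (@Fc_int _ _ _ Hint _ i)).
  - exact: (measurable_int g (@Gfun_int _ _ _ psi g i)).
  - move=> z /not_orP [/contrapT [m _ em] /contrapT [k _ ek]].
    rewrite (@Gfun_at _ _ _ psi i m z (esym em)) /Fc -ek -em.
    congr (_%:E).
    have H : \sum_(l < d) u l 0 * (phi k : 'rV[R]_d) 0 l = 1.
      transitivity ((Phi *m u) k 0).
        by rewrite mxE; apply: eq_bigr => l _; rewrite !mxE mulrC.
      by rewrite Pu mxE.
    transitivity ((psi m : 'rV[R]_d) 0 i * \sum_(l < d) u l 0 * (phi k : 'rV[R]_d) 0 l); last by rewrite H mulr1.
    by rewrite mulr_sumr; apply: eq_bigr => l _; rewrite mulrCA.
  rewrite (@Gfun_integral _ _ _ psi _ _ g i Hc Hmu Hsum).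
  by move=> /esym/eqP; rewrite eqe => /eqP.
have := congr1 (fun M : 'cV[R]_d => M (Ordinal dpos) 0) Pu.
rewrite !mxE big1 => [/eqP|l _]; last by rewrite u0 mulr0.
by rewrite eq_sym oner_eq0.
Qed.
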